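(* Let $S$ be an inverse semigroup, regarded as an algebraic structure in the language $\mathcal{L}=\{\cdot,{}^{-1}\}\cup\{s\mid s\in S\}$, and let $E=\{e\in S\mid ee=e\}$ be its set of idempotents. Suppose $E$ is linearly ordered by the natural order on idempotents and $|E|>1$. Then $S$ is not an equational domain in the language $\mathcal{L}$.
   Context: A semigroup $S$ is inverse if for every $s\in S$ there is a unique $s^{-1}\in S$ with $ss^{-1}s=s$ and $s^{-1}ss^{-1}=s^{-1}$; its idempotents commute. The natural order on idempotents is $e\le f \iff ef=e$. The language $\mathcal{L}$ consists of multiplication, inversion, and a constant symbol for every element of $S$. For variables $x_1,\dots,x_n$, a term of $\mathcal{L}$ is a finite product of variables raised to integer powers and constants from $S$. An equation is an equality of two terms; a system of equations is an arbitrary set of equations in $x_1,\dots,x_n$. A set $Y\subseteq S^n$ is algebraic over $S$ if it is the set of all tuples in $S^n$ satisfying all equations of some system. $S$ is an equational domain (in $\mathcal{L}$) if for every $n$, every finite union of algebraic subsets of $S^n$ is algebraic. *)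

(* Defs.v *)
From mathcomp Require Import all_boot.
Set Implicit Arguments. Unset Strict Implicit. Unset Printing Implicit Defensive.

Section InverseSemigroup.
Variables (S : Type) (mul : S -> S -> S) (inv : S -> S).

Record inverse_semigroup : Prop := {
  isg_assoc : forall x y z, mul x (mul y z) = mul (mul x y) z;
  isg_inv1 : forall s, mul (mul s (inv s)) s = s;
  isg_inv2 : forall s, mul (mul (inv s) s) (inv s) = inv s;
  isg_inv_unique : forall s t, mul (mul s t) s = s -> mul (mul t s) t = t -> t = inv s
}.

Definition idempotent (e : S) : Prop := mul e e = e.

Definition nat_le (e f : S) : Prop := mul e f = e.

Definition idempotents_linear : Prop :=
  forall e f, idempotent e -> idempotent f -> nat_le e f \/ nat_le f e.

Definition idempotents_nontrivial : Prop :=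
  exists e f, idempotent e /\ idempotent f /\ e <> f.

Inductive term (n : nat) : Type :=
  | TVar : 'I_n -> term n
  | TConst : S -> term n
  | TMul : term n -> term n -> term n
  | TInv : term n -> term n.

Fixpoint eval (n : nat) (p : 'I_n -> S) (t : term n) : S :=
  match t with
  | TVar i => p i
  | TConst s => s
  | TMul t1 t2 => mul (eval p t1) (eval p t2)
  | TInv t1 => inv (eval p t1)
  end.

Definition algebraic (n : nat) (Y : ('I_n -> S) -> Prop) : Prop :=
  exists Sys : (term n * term n) -> Prop,
    forall p, Y p <-> (forall eq, Sys eq -> eval p eq.1 = eval p eq.2).

Definition equational_domain : Prop :=
  forall (n m : nat) (Ys : 'I_m -> ('I_n -> S) -> Prop),
    (forall i, algebraic (Ys i)) -> algebraic (fun p => exists i, Ys i p).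

End InverseSemigroup.

(* Main.v *)
Require Import Defs.
From mathcomp Require Import all_boot.
Set Implicit Arguments. Unset Strict Implicit.

Section Alg.
Variables (S : Type) (mul : S -> S -> S) (inv : S -> S).
Hypothesis HS : inverse_semigroup mul inv.
Hypothesis Hlin : idempotents_linear mul.
Local Notation "x ** y" := (mul x y) (at level 40, left associativity).
Local Notation idem := (Defs.idempotent mul).

Let A : forall x y z, x ** (y ** z) = (x ** y) ** z := isg_assoc HS.
Let I1 s : s ** inv s ** s = s := isg_inv1 HS s.
Let I2 s : inv s ** s ** inv s = inv s := isg_inv2 HS s.
Let U s t : s ** t ** s = s -> t ** s ** t = t -> t = inv s := @isg_inv_unique _ _ _ HS s t.

Lemma I1z s z : s ** (inv s ** (s ** z)) = s ** z. Proof. by rewrite !A I1. Qed.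
Lemma I2z s z : inv s ** (s ** (inv s ** z)) = inv s ** z. Proof. by rewrite !A I2. Qed.
Lemma I1r s : s ** (inv s ** s) = s. Proof. by rewrite A I1. Qed.
Lemma I2r s : inv s ** (s ** inv s) = inv s. Proof. by rewrite A I2. Qed.

Lemma idemL g : idem g -> forall z, g ** (g ** z) = g ** z.
Proof. by move=> H z; rewrite A H. Qed.

Lemma idem_inv g : idem g -> inv g = g.
Proof. move=> H; symmetry; apply: U; by rewrite !H. Qed.

Lemma inv_inv s : inv (inv s) = s.
Proof. symmetry; apply: U; [exact: I2 | exact: I1]. Qed.

Lemma idem_mul e f : idem e -> idem f -> idem (e ** f).
Proof.
move=> He Hf.
have Hx : f ** inv (e ** f) ** e = inv (e ** f).
  apply: U.
  - rewrite -!A (idemL Hf) (idemL He).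
    by have H := I1r (e ** f); rewrite -!A in H.
  - rewrite -!A (idemL Hf) (idemL He).
    by have H := I2z (e ** f) e; rewrite -!A in H; rewrite H.
have Hxx : idem (inv (e ** f)).
  rewrite /Defs.idempotent -{1 2}Hx -!A.
  by have H := I2z (e ** f) e; rewrite -!A in H; rewrite H !A Hx.
by rewrite -(inv_inv (e ** f)) /Defs.idempotent (idem_inv Hxx).
Qed.

Lemma idem_comm e f : idem e -> idem f -> e ** f = f ** e.
Proof.
move=> He Hf.
have Hef := idem_mul He Hf; have Hfe := idem_mul Hf He.
rewrite -(idem_inv Hef); symmetry; apply: U.
- by rewrite -!A (idemL Hf) (idemL He) A Hef.
- by rewrite -!A (idemL He) (idemL Hf) A Hfe.
Qed.

Lemma idem_dom s : idem (inv s ** s). Proof. by rewrite /Defs.idempotent A I2. Qed.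
Lemma idem_ran s : idem (s ** inv s). Proof. by rewrite /Defs.idempotent A I1. Qed.

Lemma inv_mul s t : inv (s ** t) = inv t ** inv s.
Proof.
have C := idem_comm (idem_ran t) (idem_dom s).
symmetry; apply: U.
- have -> : s ** t ** (inv t ** inv s) ** (s ** t) =
            s ** ((t ** inv t) ** (inv s ** s)) ** t by rewrite -!A.
  by rewrite C -!A I1z I1r.
- have -> : inv t ** inv s ** (s ** t) ** (inv t ** inv s) =
            inv t ** ((inv s ** s) ** (t ** inv t)) ** inv s by rewrite -!A.
  by rewrite -C -!A I2z I2r.
Qed.

Lemma conj_idem g u : idem g -> idem (inv u ** g ** u).
Proof.
move=> Hg; have C := idem_comm Hg (idem_ran u).
rewrite /Defs.idempotent.
have -> : inv u ** g ** u ** (inv u ** g ** u) =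
          inv u ** (g ** (u ** inv u)) ** g ** u by rewrite -!A.
by rewrite C -!A I2z (idemL Hg).
Qed.

Lemma conj_eq g u : idem g -> g ** u = u ** (inv u ** g ** u).
Proof.
move=> Hg; have C := idem_comm Hg (idem_ran u).
have -> : u ** (inv u ** g ** u) = (u ** inv u ** g) ** u by rewrite -!A.
by rewrite -C -!A I1r.
Qed.

Definition le s t := exists2 g, idem g & s = t ** g.

Lemma le_refl s : le s s.
Proof. exists (inv s ** s); [exact: idem_dom | by rewrite I1r]. Qed.

Lemma le_trans s t u : le s t -> le t u -> le s u.
Proof.
move=> [g Hg ->] [h Hh ->]; exists (h ** g); first exact: idem_mul.
by rewrite A.
Qed.

Lemma le_mull u s t : le s t -> le (u ** s) (u ** t).
Proof. by move=> [g Hg ->]; exists g => //; rewrite A. Qed.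

Lemma le_mulr u s t : le s t -> le (s ** u) (t ** u).
Proof.
move=> [g Hg ->]; exists (inv u ** g ** u); first exact: conj_idem.
by rewrite -A (conj_eq u Hg) A.
Qed.

Lemma le_inv s t : le s t -> le (inv s) (inv t).
Proof.
move=> [g Hg ->]; exists (inv (inv t) ** g ** inv t); first exact: conj_idem.
by rewrite inv_mul (idem_inv Hg) (conj_eq (inv t) Hg).
Qed.

Lemma le_antisym s t : le s t -> le t s -> s = t.
Proof.
move=> [g Hg Hs] [h Hh Ht].
have Ht' : t = t ** g ** h by rewrite {1}Ht Hs.
rewrite Hs {1}Ht' -!A [h ** g](idem_comm Hh Hg) (idemL Hg) A -Ht'.
done.
Qed.

Lemma le_dom a b : le a b -> a = b ** (inv a ** a).
Proof.
move=> [g Hg ->]; rewrite inv_mul (idem_inv Hg).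
have -> : b ** (g ** inv b ** (b ** g)) = b ** ((g ** (inv b ** b)) ** g)
  by rewrite -!A.
by rewrite (idem_comm Hg (idem_dom b)) -!A I1z Hg.
Qed.

Lemma le_ran a b : le a b -> a = (a ** inv a) ** b.
Proof.
move=> [g Hg ->]; rewrite inv_mul (idem_inv Hg).
have -> : b ** g ** (g ** inv b) ** b = b ** (g ** g) ** (inv b ** b)
  by rewrite -!A.
rewrite Hg.
have -> : b ** g ** (inv b ** b) = b ** (g ** (inv b ** b)) by rewrite -!A.
by rewrite (idem_comm Hg (idem_dom b)) -!A I1z.
Qed.

Lemma mixed a b b' a' : le a b -> le b' a' ->
  a ** b' = a ** a' \/ a ** b' = b ** b'.
Proof.
move=> Hab Hba.
have Ha := le_dom Hab; have Hb' := le_ran Hba.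
case: (Hlin (idem_dom a) (idem_ran b')); rewrite /nat_le => H.
- left; rewrite {1}Hb' A.
  have -> : a ** (b' ** inv b') = a; last done.
  by rewrite -{1}(I1r a) -A H I1r.
- right; rewrite {1}Ha -{1}(I1 b').
  have -> : b ** (inv a ** a) ** (b' ** inv b' ** b') =
            b ** ((inv a ** a) ** (b' ** inv b')) ** b' by rewrite -!A.
  by rewrite (idem_comm (idem_dom a) (idem_ran b')) H -!A I1r.
Qed.

Definition P a b c := (c = a /\ le a b) \/ (c = b /\ le b a).

Lemma P_mul a b c a' b' c' : P a b c -> P a' b' c' -> P (a ** a') (b ** b') (c ** c').
Proof.
move=> [[-> H]|[-> H]] [[-> H']|[-> H']].
- left; split=> //; exact: le_trans (le_mulr _ H) (le_mull _ H').
- case: (mixed H H') => E.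
  + by left; split=> //; rewrite -E; exact: le_mulr.
  + by right; split=> //; rewrite -E; exact: le_mull.
- case: (mixed H H') => E.
  + by right; split=> //; rewrite -E; exact: le_mulr.
  + by left; split=> //; rewrite -E; exact: le_mull.
- right; split=> //; exact: le_trans (le_mulr _ H) (le_mull _ H').
Qed.

Lemma P_inv a b c : P a b c -> P (inv a) (inv b) (inv c).
Proof. by move=> [[-> H]|[-> H]]; [left|right]; split=> //; exact: le_inv. Qed.

Lemma P_eq a b c1 c2 : P a b c1 -> P a b c2 -> c1 = c2.
Proof.
move=> [[-> H1]|[-> H1]] [[-> H2]|[-> H2]] //; exact: le_antisym.
Qed.

Lemma P_eval n (p1 p2 q : 'I_n -> S) :
  (forall i, P (p1 i) (p2 i) (q i)) ->
  forall t, P (eval mul inv p1 t) (eval mul inv p2 t) (eval mul inv q t).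
Proof.
move=> Hv; elim=> [i|c|t1 IH1 t2 IH2|t1 IH1] /=.
- exact: Hv.
- by left; split=> //; exact: le_refl.
- exact: P_mul.
- exact: P_inv.
Qed.
End Alg.

Theorem lemma4 (S : Type) (mul : S -> S -> S) (inv : S -> S)
  (HS : inverse_semigroup mul inv)
  (Hlin : idempotents_linear mul)
  (Hcard : idempotents_nontrivial mul) :
  ~ equational_domain mul inv.
Proof.
move=> HED.
have [lo [hi [Hlo [Hhi [Hne Hle]]]]] : exists lo hi, Defs.idempotent mul lo /\
    Defs.idempotent mul hi /\ lo <> hi /\ mul lo hi = lo.
  case: Hcard => e [f [He [Hf Hef]]].
  case: (Hlin _ _ He Hf) => H; first by exists e, f.
  by exists f, e; do !split => //; move=> E; apply: Hef; rewrite E.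
pose Ys := fun (i : 'I_2) (p : 'I_2 -> S) => p i = hi.
have Halg : forall i, algebraic mul inv (Ys i).
  move=> i; exists (fun eq => eq = (TVar S i, TConst 2 hi)) => p; split.
  - by move=> Hp eq ->.
  - by move=> H; exact: (H _ erefl).
have [Sys HSys] := HED 2 2 Ys Halg.
pose p1 : 'I_2 -> S := fun i => if val i == 0 then hi else lo.
pose p2 : 'I_2 -> S := fun i => if val i == 0 then lo else hi.
pose q : 'I_2 -> S := fun _ => lo.
have Hv : forall i, P mul (p1 i) (p2 i) (q i).
  move=> i; rewrite /p1 /p2 /q; rewrite /P; case: ifP => _.
  - right; split => //; exists lo => //.
    by rewrite -(idem_comm HS Hlo Hhi) Hle.
  - left; split => //; exists lo => //.
    by rewrite -(idem_comm HS Hlo Hhi) Hle.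
have H1 : forall eq, Sys eq -> eval mul inv p1 eq.1 = eval mul inv p1 eq.2.
  by apply/HSys; exists ord0.
have H2 : forall eq, Sys eq -> eval mul inv p2 eq.1 = eval mul inv p2 eq.2.
  by apply/HSys; exists (Ordinal (isT : 1 < 2)).
have : exists i, Ys i q.
  apply/HSys => eq Heq.
  apply: (P_eq HS (P_eval HS Hlin Hv eq.1)).
  by rewrite (H1 _ Heq) (H2 _ Heq); exact: (P_eval HS Hlin Hv eq.2).
by case=> i; rewrite /Ys /q.
Qed.
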